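(* Let $G$ be a graph on node set $V=\{1,\dots,n\}$ with symmetric adjacency matrix $A\in\mathbb{R}^{n\times n}$, let $C\subseteq V$ be a set of $m$ coarse nodes, and let $S\in\mathbb{R}^{n\times m}$ be a coarsening matrix whose rows are indexed by $V$ and whose columns are indexed by $C$. Define the coarse graph $G_c$ on node set $C$ by its adjacency matrix $A_c=S^TAS$. For each $j\in C$ let $\chi(j)=\{i\in V: S_{ij}\neq 0\}$ be its aggregation set, and suppose that for every $j\in C$, $\chi(j)$ contains only $j$ itself and direct neighbors of $j$ in $G$. Then, for any $j,j'\in C$, if there is an edge connecting $j$ and $j'$ in $G_c$, the distance between $j$ and $j'$ in $G$ is at most $3$.
   Context: Edges are determined by structural nonzeros: there is an edge between nodes $p,q$ (possibly $p=q$, a self loop) iff the corresponding adjacency entry is structurally nonzero. An entry of $A$ is structurally nonzero iff it is nonzero; an entry $(A_c)_{jj'}=\sum_{i,i'} S_{ij}A_{ii'}S_{i'j'}$ is structurally nonzero if at least one summand $S_{ij}A_{ii'}S_{i'j'}$ is nonzero, even if the summands cancel algebraically. A direct neighbor of $j$ is a node $i\neq j$ with $A_{ij}\neq 0$. The distance between two nodes of $G$ is the number of edges in a shortest path connecting them. *)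

(* Defs.v *)
From mathcomp Require Import all_boot all_order all_algebra.
Set Implicit Arguments. Unset Strict Implicit. Unset Printing Implicit Defensive.
Import Order.TTheory GRing.Theory Num.Theory.
Local Open Scope ring_scope.

Definition adj (R : ringType) (n : nat) (A : 'M[R]_n) : rel 'I_n :=
  fun p q => A p q != 0.

Definition dist_le (R : ringType) (n : nat) (A : 'M[R]_n) (k : nat)
  (x y : 'I_n) : Prop :=
  exists p : seq 'I_n, [/\ path (adj A) x p, last x p = y & (size p <= k)%N].

Definition chi (R : ringType) (n m : nat) (S : 'M[R]_(n, m)) (j : 'I_m)
  : {set 'I_n} := [set i | S i j != 0].

Definition coarse_adj (R : ringType) (n m : nat) (A : 'M[R]_n)
  (S : 'M[R]_(n, m)) : 'M[R]_m := S^T *m A *m S.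

(* (A_c)_{jj'} = sum_{i,i'} S_ij A_ii' S_i'j' is structurally nonzero iff some
   summand is nonzero (even if the summands cancel). *)
Definition coarse_edge (R : ringType) (n m : nat) (A : 'M[R]_n)
  (S : 'M[R]_(n, m)) (j j' : 'I_m) : Prop :=
  exists i i' : 'I_n, S i j * A i i' * S i' j' != 0.

(* Main.v *)
Require Import Defs.
From mathcomp Require Import all_boot all_order all_algebra.
Import Order.TTheory GRing.Theory Num.Theory.
Local Open Scope ring_scope.

Theorem corollary1 (R : realFieldType) (n m : nat) (A : 'M[R]_n)
  (S : 'M[R]_(n, m)) (c : 'I_m -> 'I_n) :
  A^T = A ->
  injective c ->
  (forall j : 'I_m, forall i, i \in chi S j ->
     i = c j \/ (i != c j /\ A i (c j) != 0)) ->
  forall j j' : 'I_m, coarse_edge A S j j' -> dist_le A 3 (c j) (c j').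
Proof.
move=> HA _ Hchi j j' [i [i' H]].
have Hs : forall a b, A a b = A b a.
  by move=> a b; rewrite -{1}HA mxE.
have Sij : S i j != 0.
  by apply: contra H => /eqP ->; rewrite !mul0r.
have Aii : A i i' != 0.
  by apply: contra H => /eqP ->; rewrite mulr0 mul0r.
have Sij' : S i' j' != 0.
  by apply: contra H => /eqP ->; rewrite mulr0.
have := Hchi j i; rewrite inE => /(_ Sij) [Ei|[_ Ai]];
have := Hchi j' i'; rewrite inE => /(_ Sij') [Ei'|[_ Ai']].
- exists [:: i']; rewrite /= -Ei -Ei' /adj Aii; split => //.
- exists [:: i'; c j']; rewrite /= -Ei /adj Aii Ai'; split => //.
- exists [:: i; i']; rewrite /= -Ei' /adj Aii Hs Ai; split => //.
- exists [:: i; i'; c j']; rewrite /= /adj Aii Hs Ai Ai'; split => //.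
Qed.
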